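(* In the iPALM setting described in the context, suppose $\beta_k=\beta_0\sigma^k$ and $\rho_k=\rho_0\sigma^{-k}$ for all $k\ge0$, with $\beta_0>0$, $\rho_0>0$, $\sigma>1$. Then for every $k\ge0$, $$\sqrt{\beta_0\rho_0\|x^{(k+1)}-x^*\|^2+\|\lambda^{(k+1)}-\lambda^*\|^2}\le\sum_{i=0}^k\frac{2\beta_i\bar\varepsilon_i}{\sqrt{\beta_0\rho_0}}+\sqrt{\beta_0\rho_0\|x^{(0)}-x^*\|^2+\|\lambda^{(0)}-\lambda^*\|^2}.$$
   Context: iPALM setting. Consider $\min_x G(x):=f(x)+r(x)$ subject to $A_Ex=b_E$, $A_Ix\le b_I$, where $f:\mathbb R^n\to\mathbb R$ is convex, differentiable with $L_f$-Lipschitz gradient and $\mu$-strongly convex ($\mu\ge0$), and $r$ is proper closed convex. Write $A=[A_E;A_I]$, $b=[b_E;b_I]$, and multipliers $\lambda=[\lambda_E;\lambda_I]$. Assume $(x^*,\lambda^* )$ satisfies the KKT conditions $0\in\partial G(x^* )+A^\top\lambda^*$, $A_Ex^*=b_E$, $A_Ix^*\le b_I$, $\lambda_I^*\ge0$, $\langle\lambda_I^*,A_Ix^*-b_I\rangle=0$. The augmented Lagrangian is $\mathcal L_\beta(x,\lambda)=G(x)+\langle\lambda_E,A_Ex-b_E\rangle+\frac\beta2\|A_Ex-b_E\|^2+\frac1{2\beta}\big(\|[\beta(A_Ix-b_I)+\lambda_I]_+\|^2-\|\lambda_I\|^2\big)$, with $[\cdot]_+$ the componentwise positive part. Given $x^{(0)}\in\mathrm{dom}(G)$,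 $\lambda^{(0)}$, and positive numbers $\beta_k,\rho_k$ and $\bar\varepsilon_k\ge0$, the iPALM iterates satisfy for each $k\ge0$: with $\Psi_k(x)=\mathcal L_{\beta_k}(x,\lambda^{(k)})+\frac{\rho_k}2\|x-x^{(k)}\|^2$, the point $x^{(k+1)}$ is any point with $\mathrm{dist}(0,\partial\Psi_k(x^{(k+1)}))\le\bar\varepsilon_k$, and $\lambda_E^{(k+1)}=\lambda_E^{(k)}+\beta_k(A_Ex^{(k+1)}-b_E)$, $\lambda_I^{(k+1)}=[\lambda_I^{(k)}+\beta_k(A_Ix^{(k+1)}-b_I)]_+$. $\partial$ is the convex subdifferential and $\mathrm{dist}(0,S)=\inf_{s\in S}\|s\|$. *)

(* Defs.v *)
From HB Require Import structures.
From mathcomp Require Import all_boot all_order all_algebra.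
From mathcomp Require Import reals constructive_ereal.
Set Implicit Arguments. Unset Strict Implicit. Unset Printing Implicit Defensive.
Import Order.TTheory GRing.Theory Num.Theory.
Local Open Scope ring_scope.

Section IPALM.
Variable R : realType.

Definition dotv (n : nat) (u v : 'cV[R]_n) : R := \sum_(i < n) u i 0 * v i 0.
Definition normv (n : nat) (u : 'cV[R]_n) : R := Num.sqrt (dotv u u).

Definition pospart (m : nat) (u : 'cV[R]_m) : 'cV[R]_m :=
  map_mx (fun t => Num.max t 0) u.

Definition convex_fun (n : nat) (f : 'cV[R]_n -> R) : Prop :=
  forall x y (t : R), 0 <= t <= 1 ->
    f (t *: x + (1 - t) *: y) <= t * f x + (1 - t) * f y.

Definition strongly_convex (n : nat) (mu : R) (f : 'cV[R]_n -> R) : Prop :=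
  forall x y (t : R), 0 <= t <= 1 ->
    f (t *: x + (1 - t) *: y) <=
      t * f x + (1 - t) * f y - mu / 2 * t * (1 - t) * normv (x - y) ^+ 2.

Definition has_gradient (n : nat) (f : 'cV[R]_n -> R) (gradf : 'cV[R]_n -> 'cV[R]_n)
  : Prop :=
  forall x (e : R), 0 < e -> exists2 d : R, 0 < d &
    forall y, normv (y - x) < d ->
      `| f y - f x - dotv (gradf x) (y - x) | <= e * normv (y - x).

Definition lipschitz_grad (n : nat) (L : R) (gradf : 'cV[R]_n -> 'cV[R]_n) : Prop :=
  forall x y, normv (gradf x - gradf y) <= L * normv (x - y).

Definition proper_fun (n : nat) (r : 'cV[R]_n -> \bar R) : Prop :=
  (exists x, (r x < +oo)%E) /\ (forall x, (-oo < r x)%E).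

Definition convex_efun (n : nat) (r : 'cV[R]_n -> \bar R) : Prop :=
  forall x y : 'cV[R]_n, forall t : R, 0 <= t <= 1 ->
    (r (t *: x + (1 - t) *: y)%R <= t%:E * r x + (1 - t)%:E * r y)%E.

(* closed = lower semicontinuous *)
Definition lsc_efun (n : nat) (r : 'cV[R]_n -> \bar R) : Prop :=
  forall x (a : R), (a%:E < r x)%E -> exists2 d : R, 0 < d &
    forall y, normv (y - x) < d -> (a%:E < r y)%E.

Definition subgrad (n : nat) (F : 'cV[R]_n -> \bar R) (x g : 'cV[R]_n) : Prop :=
  F x \is a fin_num /\ forall y, (F x + (dotv g (y - x))%:E <= F y)%E.

(* dist(0, \partial F(x)) <= eps, i.e. inf_{g in \partial F(x)} ||g|| <= eps
   (with inf of the empty set = +oo) *)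
Definition dist0_subdiff_le (n : nat) (F : 'cV[R]_n -> \bar R) (x : 'cV[R]_n)
  (eps : R) : Prop :=
  forall delta : R, 0 < delta -> exists g, subgrad F x g /\ normv g < eps + delta.

Definition Gfun (n : nat) (f : 'cV[R]_n -> R) (r : 'cV[R]_n -> \bar R)
  (x : 'cV[R]_n) : \bar R := ((f x)%:E + r x)%E.

Definition aug_lag (n mE mI : nat) (f : 'cV[R]_n -> R) (r : 'cV[R]_n -> \bar R)
  (AE : 'M[R]_(mE, n)) (bE : 'cV[R]_mE) (AI : 'M[R]_(mI, n)) (bI : 'cV[R]_mI)
  (beta : R) (x : 'cV[R]_n) (lE : 'cV[R]_mE) (lI : 'cV[R]_mI) : \bar R :=
  (Gfun f r x +
   (dotv lE (AE *m x - bE) + beta / 2 * normv (AE *m x - bE) ^+ 2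
    + 1 / (2 * beta) * (normv (pospart (beta *: (AI *m x - bI) + lI)) ^+ 2
                        - normv lI ^+ 2))%:E)%E.

End IPALM.

(* Main.v *)
Require Import Defs.
From HB Require Import structures.
From mathcomp Require Import all_boot all_order all_algebra.
From mathcomp Require Import reals constructive_ereal.
From mathcomp Require Import lra ring.
Set Implicit Arguments. Unset Strict Implicit. Unset Printing Implicit Defensive.
Import Order.TTheory GRing.Theory Num.Theory.
Local Open Scope ring_scope.

Section Dot.
Variable R : realType.
Implicit Types (n : nat).

Lemma dotvC n (u v : 'cV[R]_n) : dotv u v = dotv v u.
Proof. by rewrite /dotv; apply: eq_bigr => i _; rewrite mulrC. Qed.

Lemma dotvDl n (u v w : 'cV[R]_n) : dotv (u + v) w = dotv u w + dotv v w.
Proof. by rewrite /dotv -big_split; apply: eq_bigr => i _; rewrite !mxE mulrDl. Qed.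

Lemma dotvDr n (u v w : 'cV[R]_n) : dotv w (u + v) = dotv w u + dotv w v.
Proof. by rewrite dotvC dotvDl !(dotvC w). Qed.

Lemma dotvZl n a (u w : 'cV[R]_n) : dotv (a *: u) w = a * dotv u w.
Proof. by rewrite /dotv mulr_sumr; apply: eq_bigr => i _; rewrite !mxE mulrA. Qed.

Lemma dotvZr n a (u w : 'cV[R]_n) : dotv w (a *: u) = a * dotv w u.
Proof. by rewrite dotvC dotvZl dotvC. Qed.

Lemma dotvNl n (u w : 'cV[R]_n) : dotv (- u) w = - dotv u w.
Proof. by rewrite -scaleN1r dotvZl mulN1r. Qed.

Lemma dotvNr n (u w : 'cV[R]_n) : dotv w (- u) = - dotv w u.
Proof. by rewrite dotvC dotvNl dotvC. Qed.

Lemma dotvBl n (u v w : 'cV[R]_n) : dotv (u - v) w = dotv u w - dotv v w.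
Proof. by rewrite dotvDl dotvNl. Qed.

Lemma dotvBr n (u v w : 'cV[R]_n) : dotv w (u - v) = dotv w u - dotv w v.
Proof. by rewrite dotvDr dotvNr. Qed.

Lemma dotv_ge0 n (u : 'cV[R]_n) : 0 <= dotv u u.
Proof. by apply: sumr_ge0 => i _; rewrite -expr2 sqr_ge0. Qed.

Lemma normv2 n (u : 'cV[R]_n) : normv u ^+ 2 = dotv u u.
Proof. by rewrite /normv sqr_sqrtr // dotv_ge0. Qed.

Lemma normv_ge0 n (u : 'cV[R]_n) : 0 <= normv u.
Proof. exact: sqrtr_ge0. Qed.

Lemma dotv_mulmx m n (A : 'M[R]_(m, n)) (u : 'cV[R]_m) (v : 'cV[R]_n) :
  dotv u (A *m v) = dotv (A^T *m u) v.
Proof.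
rewrite /dotv.
under eq_bigr do rewrite mxE big_distrr /=.
rewrite exchange_big /=; apply: eq_bigr => j _.
rewrite mxE big_distrl /=; apply: eq_bigr => i _; rewrite mxE; ring.
Qed.

Lemma dotv_le n (u v : 'cV[R]_n) : 2 * dotv u v <= dotv u u + dotv v v.
Proof.
have := dotv_ge0 (u - v).
rewrite !dotvBl !dotvBr (dotvC v u); lra.
Qed.

Lemma normv0_dotv n (u v : 'cV[R]_n) : normv u = 0 -> dotv u v = 0.
Proof.
move=> u0.
have : dotv u u = 0 by rewrite -normv2 u0 expr0n.
move=> /eqP; rewrite /dotv psumr_eq0; last by move=> i _; rewrite -expr2 sqr_ge0.
move=> /allP H; rewrite big1 // => i _.
have := H i (mem_index_enum _); rewrite -expr2 sqrf_eq0 => /eqP ->; by rewrite mul0r.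
Qed.

Lemma dotv_cs n (u v : 'cV[R]_n) : dotv u v <= normv u * normv v.
Proof.
have [u0|upos] := eqVneq (normv u) 0.
  by rewrite normv0_dotv // u0 mul0r.
have [v0|vpos] := eqVneq (normv v) 0.
  by rewrite dotvC normv0_dotv // v0 mulr0.
have up : 0 < normv u by rewrite lt_neqAle eq_sym upos normv_ge0.
have vp : 0 < normv v by rewrite lt_neqAle eq_sym vpos normv_ge0.
set a := normv v / normv u.
have ap : 0 < a by rewrite divr_gt0.
have := dotv_ge0 (a *: u - v).
rewrite !dotvBl !dotvBr !dotvZl !dotvZr -!normv2 (dotvC v u) => H.
have E : a * normv u = normv v by rewrite /a divfK // gt_eqF.
clearbody a.
have : 2 * a * dotv u v <= 2 * a * (normv u * normv v).
  rewrite -E; move: H; rewrite -E; nra.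
have ap2 : 0 < 2 * a by rewrite mulr_gt0.
by rewrite ler_pM2l.
Qed.

End Dot.

Section Scal.
Variable R : realType.

Lemma maxE0 (a : R) : 0 <= a -> Num.max a 0 = a.
Proof. by move=> h; rewrite max_l. Qed.
Lemma maxE0' (a : R) : a < 0 -> Num.max a 0 = 0.
Proof. by move=> h; rewrite max_r // ltW. Qed.

Lemma max_quad (a b : R) :
  Num.max (a + b) 0 ^+ 2 <= Num.max a 0 ^+ 2 + 2 * Num.max a 0 * b + b ^+ 2.
Proof.
set m1 := Num.max (a + b) 0; set m0 := Num.max a 0.
have [ha|ha] := leP 0 a.
  have -> : m0 = a by apply: max_l.
  have [hb|hb] := leP 0 (a + b).
    have -> : m1 = a + b by apply: max_l.
    nra.
  have -> : m1 = 0 by apply: max_r; apply: ltW.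
  nra.
have -> : m0 = 0 by apply: max_r; apply: ltW.
have [hb|hb] := leP 0 (a + b).
  have -> : m1 = a + b by apply: max_l.
  nra.
have -> : m1 = 0 by apply: max_r; apply: ltW.
nra.
Qed.

Lemma pospart_quad m (a b : 'cV[R]_m) :
  normv (pospart (a + b)) ^+ 2 <=
  normv (pospart a) ^+ 2 + 2 * dotv (pospart a) b + normv b ^+ 2.
Proof.
rewrite !normv2 /dotv mulr_sumr -!big_split /=.
apply: ler_sum => i _; rewrite !mxE -!expr2.
by have := max_quad (a i 0) (b i 0); rewrite mulrA.
Qed.

Lemma lim_t (a b C : R) : (forall t, 0 < t <= 1 -> a <= b + t * C) -> a <= b.
Proof.
move=> H; apply/ler_addgt0Pr => e e0.
set C' := `|C| + 1.
have C'p : 0 < C' by rewrite /C'; have := normr_ge0 C; lra.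
set t := Num.min 1 (e / C').
have t0 : 0 < t by rewrite /t lt_min ltr01 divr_gt0.
have t1 : t <= 1 by rewrite /t ge_min lexx.
have te : t * C' <= e.
  have : t <= e / C' by rewrite /t ge_min lexx orbT.
  by rewrite ler_pdivlMr.
have := H t; rewrite t0 t1 => /(_ isT) h.
have : t * C <= t * C'.
  by rewrite ler_pM2l // /C'; have := ler_norm C; lra.
lra.
Qed.

Lemma final_sqrt (P Q e : R) : 0 <= P -> 0 <= Q -> 0 <= e ->
  P - Q <= 2 * e * Num.sqrt P -> Num.sqrt P <= Num.sqrt Q + 2 * e.
Proof.
move=> hP hQ he H.
have p0 := sqrtr_ge0 P; have q0 := sqrtr_ge0 Q.
have pp : P = Num.sqrt P * Num.sqrt P by rewrite -expr2 sqr_sqrtr.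
have qq : Q = Num.sqrt Q * Num.sqrt Q by rewrite -expr2 sqr_sqrtr.
move: H p0 q0 pp qq; set p := Num.sqrt P; set q := Num.sqrt Q => H p0 q0 pp qq.
rewrite leNgt; apply/negP => hlt.
have h1 : q < p - 2 * e by lra.
have pp0 : 0 < p by lra.
have h2 : p * q < p * (p - 2 * e) by rewrite ltr_pM2l.
have h3 : q * q <= p * q by rewrite ler_wpM2r //; lra.
move: H h2 h3; rewrite pp qq mulrBr; nra.
Qed.

Lemma lamI_comp (beta l0 ls a1 as_ b : R) : 0 < beta -> 0 <= ls -> as_ <= b ->
  (Num.max (l0 + beta * (a1 - b)) 0 - ls) * (Num.max (l0 + beta * (a1 - b)) 0 - l0)
  + beta * (ls * (as_ - b))
  <= beta * ((Num.max (l0 + beta * (a1 - b)) 0 - ls) * (a1 - as_)).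
Proof.
move=> hb hls hab.
set u := l0 + beta * (a1 - b).
set l' := Num.max u 0.
have hl' : 0 <= l' by rewrite /l' le_max lexx orbT.
have key : 0 <= (l' - ls) * (u - l').
  have [hu|hu] := leP 0 u.
    have -> : l' = u by apply: max_l.
    by rewrite subrr mulr0.
  have -> : l' = 0 by apply: max_r; apply: ltW.
  nra.
have k2 : 0 <= beta * (l' * (b - as_)) by apply: mulr_ge0; [lra| apply: mulr_ge0; lra].
have E : beta * ((l' - ls) * (a1 - as_)) = (l' - ls) * (u - l0) - beta * ((l' - ls) * (as_ - b)).
  rewrite /u; ring.
rewrite E; nra.
Qed.

Lemma lamI_ineq m (beta : R) (l0 ls a1 as_ b : 'cV[R]_m) : 0 < beta ->
  (forall i, 0 <= ls i 0) -> (forall i, as_ i 0 <= b i 0) ->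
  dotv (pospart (l0 + beta *: (a1 - b)) - ls) (pospart (l0 + beta *: (a1 - b)) - l0)
  + beta * dotv ls (as_ - b)
  <= beta * dotv (pospart (l0 + beta *: (a1 - b)) - ls) (a1 - as_).
Proof.
move=> hb hls hab.
rewrite /dotv !mulr_sumr -big_split /=; apply: ler_sum => i _.
rewrite !mxE.
by have := lamI_comp (l0 i 0) (a1 i 0) hb (hls i) (hab i).
Qed.

End Scal.

Section Hq.
Variable R : realType.
Variables (n mE mI : nat) (AE : 'M[R]_(mE, n)) (bE : 'cV[R]_mE)
  (AI : 'M[R]_(mI, n)) (bI : 'cV[R]_mI).
Variables (beta rho : R) (x0 : 'cV[R]_n) (lE0 : 'cV[R]_mE) (lI0 : 'cV[R]_mI).
Hypothesis hbeta : 0 < beta.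

Definition Hq (z : 'cV[R]_n) : R :=
  dotv lE0 (AE *m z - bE) + beta / 2 * normv (AE *m z - bE) ^+ 2
  + 1 / (2 * beta) * (normv (pospart (beta *: (AI *m z - bI) + lI0)) ^+ 2
                      - normv lI0 ^+ 2)
  + rho / 2 * normv (z - x0) ^+ 2.

Lemma nq m (u v : 'cV[R]_m) t :
  normv (u + t *: v) ^+ 2 = normv u ^+ 2 + 2 * t * dotv u v + t ^+ 2 * normv v ^+ 2.
Proof. by rewrite !normv2 dotvDl !dotvDr !dotvZl !dotvZr (dotvC v u); ring. Qed.

Lemma Hq_bound (x1 d : 'cV[R]_n) t : 0 <= t ->
  Hq (x1 + t *: d) <= Hq x1 + t * (dotv (lE0 + beta *: (AE *m x1 - bE)) (AE *m d)
     + dotv (pospart (beta *: (AI *m x1 - bI) + lI0)) (AI *m d)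
     + rho * dotv (x1 - x0) d)
   + t ^+ 2 * (beta / 2 * normv (AE *m d) ^+ 2 + beta / 2 * normv (AI *m d) ^+ 2
     + rho / 2 * normv d ^+ 2).
Proof.
move=> ht.
rewrite /Hq.
have e1 : AE *m (x1 + t *: d) - bE = (AE *m x1 - bE) + t *: (AE *m d).
  by rewrite mulmxDr -scalemxAr addrAC.
have e2 : beta *: (AI *m (x1 + t *: d) - bI) + lI0 =
          (beta *: (AI *m x1 - bI) + lI0) + (t * beta) *: (AI *m d).
  rewrite mulmxDr -scalemxAr.
  set A1 := AI *m x1; set Ad := AI *m d.
  by apply/matrixP => i j; rewrite !mxE; ring.
have e3 : x1 + t *: d - x0 = (x1 - x0) + t *: d by rewrite addrAC.
rewrite e1 e2 e3 !nq dotvDr dotvZr.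
set a := beta *: (AI *m x1 - bI) + lI0.
have hI : 1 / (2 * beta) * (normv (pospart (a + (t * beta) *: (AI *m d))) ^+ 2
            - normv lI0 ^+ 2)
  <= 1 / (2 * beta) * (normv (pospart a) ^+ 2 - normv lI0 ^+ 2)
     + t * dotv (pospart a) (AI *m d) + t ^+ 2 * (beta / 2 * normv (AI *m d) ^+ 2).
  have := pospart_quad a ((t * beta) *: (AI *m d)).
  rewrite dotvZr (normv2 (_ *: _)) dotvZl dotvZr -normv2.
  set N := normv (pospart (a + _)) ^+ 2 => H.
  have -> : 1 / (2 * beta) * (normv (pospart a) ^+ 2 - normv lI0 ^+ 2)
     + t * dotv (pospart a) (AI *m d) + t ^+ 2 * (beta / 2 * normv (AI *m d) ^+ 2)
     = 1 / (2 * beta) * (normv (pospart a) ^+ 2 + 2 * (t * beta * dotv (pospart a) (AI *m d))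
        + t * beta * (t * beta * normv (AI *m d) ^+ 2) - normv lI0 ^+ 2).
    by field; rewrite gt_eqF.
  apply: ler_wpM2l; first by rewrite divr_ge0 // mulr_ge0 // ltW.
  lra.
set D1 := dotv lE0 (AE *m x1 - bE).
rewrite (dotvDl lE0) dotvZl.
move: hI; set PI := 1 / (2 * beta) * _; set PI' := 1 / (2 * beta) * _ => hI.
rewrite -/PI -/PI'.
have hb2 : beta / 2 * (2 * t * dotv (AE *m x1 - bE) (AE *m d)) = t * (beta * dotv (AE *m x1 - bE) (AE *m d)).
  by field.
have hr2 : rho / 2 * (2 * t * dotv (x1 - x0) d) = t * (rho * dotv (x1 - x0) d) by field.
nra.
Qed.

End Hq.

Section Gineq.
Variable R : realType.
Variables (n mE mI : nat) (f : 'cV[R]_n -> R) (r : 'cV[R]_n -> \bar R)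
  (AE : 'M[R]_(mE, n)) (bE : 'cV[R]_mE)
  (AI : 'M[R]_(mI, n)) (bI : 'cV[R]_mI).
Variables (beta rho : R) (x0 : 'cV[R]_n) (lE0 : 'cV[R]_mE) (lI0 : 'cV[R]_mI).

Definition Psi (z : 'cV[R]_n) : \bar R :=
  (aug_lag f r AE bE AI bI beta z lE0 lI0 + (rho / 2 * normv (z - x0) ^+ 2)%:E)%E.

Lemma PsiE z rz : r z = rz%:E ->
  Psi z = (f z + rz + Hq AE bE AI bI beta rho x0 lE0 lI0 z)%:E.
Proof.
move=> E; rewrite /Psi /aug_lag /Gfun E -!EFinD; congr (_%:E).
by rewrite /Hq; ring.
Qed.

Lemma G_ineq (x1 xs g : 'cV[R]_n) rs :
  0 < beta -> convex_fun f -> convex_efun r -> (forall x, (-oo < r x)%E) ->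
  r xs = rs%:E -> subgrad Psi x1 g ->
  exists r1, r x1 = r1%:E /\
    dotv g (xs - x1)
    - (dotv (lE0 + beta *: (AE *m x1 - bE)) (AE *m (xs - x1))
       + dotv (pospart (beta *: (AI *m x1 - bI) + lI0)) (AI *m (xs - x1))
       + rho * dotv (x1 - x0) (xs - x1))
    <= (f xs + rs) - (f x1 + r1).
Proof.
move=> hb fc rc rp Es [Hfin Hsub].
case E1 : (r x1) => [r1| |].
- exists r1; split => //.
  set d := xs - x1.
  apply: (@lim_t _ _ _ (beta / 2 * normv (AE *m d) ^+ 2 + beta / 2 * normv (AI *m d) ^+ 2
     + rho / 2 * normv d ^+ 2)) => t /andP [t0 t1].
  set zt := x1 + t *: d.
  have ez : t *: xs + (1 - t) *: x1 = zt.
    rewrite /zt /d; apply/matrixP => i j; rewrite !mxE; ring.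
  have hr := rc xs x1 t; rewrite ez Es E1 -!EFinM -EFinD in hr.
  have /hr {}hr : 0 <= t <= 1 by rewrite ltW.
  have hf := fc xs x1 t; rewrite ez in hf.
  have /hf {}hf : 0 <= t <= 1 by rewrite ltW.
  case Et : (r zt) hr => [rt| |] hr; last first.
  + by have := rp zt; rewrite Et.
  + by move: hr; rewrite leye_eq.
  rewrite lee_fin in hr.
  have := Hsub zt; rewrite (PsiE E1) (PsiE Et) -EFinD lee_fin.
  have -> : zt - x1 = t *: d by rewrite /zt addrAC subrr add0r.
  rewrite dotvZr => hs.
  have hq := Hq_bound AE bE AI bI rho x0 lE0 lI0 hb x1 d (ltW t0).
  rewrite -/zt in hq.
  set X := dotv g d - _.
  have : t * X <= t * ((f xs + rs - (f x1 + r1)) + t * (beta / 2 * normv (AE *m d) ^+ 2 +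
     beta / 2 * normv (AI *m d) ^+ 2 + rho / 2 * normv d ^+ 2)).
    rewrite /X; nra.
  by rewrite ler_pM2l.
- by move: Hfin; rewrite /Psi /aug_lag /Gfun E1.
- by have := rp x1; rewrite E1.
Qed.

End Gineq.

Section Step.
Variable R : realType.

Lemma dotv0l m (u : 'cV[R]_m) : dotv 0 u = 0.
Proof. by rewrite /dotv big1 // => i _; rewrite mxE mul0r. Qed.

Lemma subv3 m (a b c : 'cV[R]_m) : a - b = (a - c) - (b - c).
Proof. by rewrite opprB addrA subrK. Qed.

Lemma step (n mE mI : nat) (f : 'cV[R]_n -> R) (r : 'cV[R]_n -> \bar R)
  (AE : 'M[R]_(mE, n)) (bE : 'cV[R]_mE) (AI : 'M[R]_(mI, n)) (bI : 'cV[R]_mI)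
  (xs : 'cV[R]_n) (lEs : 'cV[R]_mE) (lIs : 'cV[R]_mI)
  (x0 x1 : 'cV[R]_n) (lE0 lE1 : 'cV[R]_mE) (lI0 lI1 : 'cV[R]_mI)
  (beta rho eps c : R) :
  convex_fun f -> convex_efun r -> (forall x, (-oo < r x)%E) ->
  (exists g, subgrad (Gfun f r) xs g /\
     g + AE^T *m lEs + AI^T *m lIs = 0) ->
  AE *m xs = bE ->
  (forall i, (AI *m xs) i 0 <= bI i 0) ->
  (forall i, 0 <= lIs i 0) ->
  dotv lIs (AI *m xs - bI) = 0 ->
  0 < beta -> 0 < rho -> beta * rho = c -> 0 <= eps ->
  dist0_subdiff_le (Psi f r AE bE AI bI beta rho x0 lE0 lI0) x1 eps ->
  lE1 = lE0 + beta *: (AE *m x1 - bE) ->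
  lI1 = pospart (lI0 + beta *: (AI *m x1 - bI)) ->
  Num.sqrt (c * normv (x1 - xs) ^+ 2
              + (normv (lE1 - lEs) ^+ 2 + normv (lI1 - lIs) ^+ 2))
  <= 2 * beta * eps / Num.sqrt c
     + Num.sqrt (c * normv (x0 - xs) ^+ 2
              + (normv (lE0 - lEs) ^+ 2 + normv (lI0 - lIs) ^+ 2)).
Proof.
move=> fc rc rp [gs [[Gfin Gsub] Hgs]] hAE hAI hlIs hcomp hb hr hc he Hd HE HI.
have c0 : 0 < c by rewrite -hc mulr_gt0.
have sc0 : 0 < Num.sqrt c by rewrite sqrtr_gt0.
case Es : (r xs) Gfin => [rs| |] Gfin; last first.
- by have := rp xs; rewrite Es.
- by move: Gfin; rewrite /Gfun Es.
set P := c * _ + _; set Q := c * _ + _.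
have hP : 0 <= P by rewrite /P; apply: addr_ge0; [apply: mulr_ge0; [lra|]|apply: addr_ge0];
  rewrite normv2 dotv_ge0.
have hQ : 0 <= Q by rewrite /Q; apply: addr_ge0; [apply: mulr_ge0; [lra|]|apply: addr_ge0];
  rewrite normv2 dotv_ge0.
suff H : forall delta, 0 < delta ->
    Num.sqrt P <= Num.sqrt Q + 2 * (beta * (eps + delta) / Num.sqrt c).
  apply/ler_addgt0Pr => e e0.
  have := H (e * Num.sqrt c / (2 * beta)).
  have -> : Num.sqrt Q + 2 * (beta * (eps + e * Num.sqrt c / (2 * beta)) / Num.sqrt c)
     = 2 * beta * eps / Num.sqrt c + Num.sqrt Q + e.
    by field; rewrite !gt_eqF.
  apply; apply: divr_gt0; [exact: mulr_gt0 | lra].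
move=> delta d0.
have [g [Hsg Hng]] := Hd delta d0.
have [r1 [E1 HA]] := G_ineq hb fc rc rp Es Hsg.
have HB := Gsub x1; rewrite /Gfun Es E1 -!EFinD lee_fin in HB.
set y := x1 - xs.
have ed : xs - x1 = - y by rewrite opprB.
rewrite ed !mulmxN !dotvNr -/y in HA.
have hgs : dotv gs y = - dotv lEs (AE *m y) - dotv lIs (AI *m y).
  have : dotv (gs + AE^T *m lEs + AI^T *m lIs) y = 0 by rewrite Hgs dotv0l.
  rewrite !dotvDl -!dotv_mulmx; lra.
rewrite hgs in HB.
have eAE : AE *m y = AE *m x1 - bE by rewrite /y mulmxBr hAE.
have eAI : AI *m y = AI *m x1 - AI *m xs by rewrite /y mulmxBr.
have hE : beta * dotv (lE1 - lEs) (AE *m y) = dotv (lE1 - lEs) (lE1 - lE0).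
  rewrite eAE; have -> : lE1 - lE0 = beta *: (AE *m x1 - bE) by rewrite HE addrAC subrr add0r.
  by rewrite dotvZr.
have hI := lamI_ineq lI0 (AI *m x1) hb hlIs hAI.
rewrite -HI hcomp mulr0 addr0 -eAI in hI.
have eI : beta *: (AI *m x1 - bI) + lI0 = lI0 + beta *: (AI *m x1 - bI) by rewrite addrC.
rewrite eI -HI -HE in HA.
have mono : c * dotv (x1 - x0) y + dotv (lE1 - lEs) (lE1 - lE0)
            + dotv (lI1 - lIs) (lI1 - lI0) <= beta * dotv g y.
  have S : - dotv g y + dotv (lE1 - lEs) (AE *m y) + dotv (lI1 - lIs) (AI *m y)
           + rho * dotv (x1 - x0) y <= 0.
    rewrite (dotvBl lE1) (dotvBl lI1); lra.
  rewrite -hc -hE.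
  have : beta * (- dotv g y + dotv (lE1 - lEs) (AE *m y) + dotv (lI1 - lIs) (AI *m y)
           + rho * dotv (x1 - x0) y) <= 0.
    by rewrite pmulr_rle0.
  nra.
rewrite (subv3 x1 x0 xs) (subv3 lE1 lE0 lEs) (subv3 lI1 lI0 lIs) -/y in mono.
rewrite (dotvBl y) (dotvBr (lE1 - lEs) (lE0 - lEs)) (dotvBr (lI1 - lIs) (lI0 - lIs)) in mono.
have l1 := dotv_le (x0 - xs) y.
have l2 := dotv_le (lE1 - lEs) (lE0 - lEs).
have l3 := dotv_le (lI1 - lIs) (lI0 - lIs).
have PQ : P - Q <= 2 * (beta * dotv g y).
  rewrite /P /Q !normv2 -/y.
  have : c * (2 * dotv (x0 - xs) y) <= c * (dotv (x0 - xs) (x0 - xs) + dotv y y).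
    by rewrite ler_pM2l.
  lra.
have cs := dotv_cs g y.
have ny0 := normv_ge0 y.
have ng0 := normv_ge0 g.
have hny : Num.sqrt c * normv y <= Num.sqrt P.
  have -> : Num.sqrt c * normv y = Num.sqrt (c * normv y ^+ 2).
    by rewrite sqrtrM ?ltW // sqrtr_sqr ger0_norm.
  rewrite ler_sqrt //.
  rewrite /P -/y; have := dotv_ge0 (lE1 - lEs); have := dotv_ge0 (lI1 - lIs).
  rewrite -!normv2; lra.
have he2 : 0 <= beta * (eps + delta) / Num.sqrt c.
  by apply: divr_ge0; [apply: mulr_ge0; lra | lra].
apply: final_sqrt => //.
have : beta * dotv g y <= beta * ((eps + delta) * normv y).
  rewrite ler_pM2l //; apply: (le_trans cs); apply: ler_wpM2r => //; exact: ltW.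
have -> : 2 * (beta * (eps + delta) / Num.sqrt c) * Num.sqrt P
   = 2 * beta * (eps + delta) * (Num.sqrt P / Num.sqrt c) by field; rewrite gt_eqF.
have : normv y <= Num.sqrt P / Num.sqrt c by rewrite ler_pdivlMr // mulrC.
move=> h1 h2.
have : beta * (eps + delta) * normv y <= beta * (eps + delta) * (Num.sqrt P / Num.sqrt c).
  by rewrite ler_wpM2l //; apply: mulr_ge0; lra.
lra.
Qed.

End Step.

Theorem lemma5p3 (R : realType) (n mE mI : nat)
  (f : 'cV[R]_n -> R) (gradf : 'cV[R]_n -> 'cV[R]_n) (Lf mu : R)
  (r : 'cV[R]_n -> \bar R)
  (AE : 'M[R]_(mE, n)) (bE : 'cV[R]_mE) (AI : 'M[R]_(mI, n)) (bI : 'cV[R]_mI)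
  (xs : 'cV[R]_n) (lEs : 'cV[R]_mE) (lIs : 'cV[R]_mI)
  (x : nat -> 'cV[R]_n) (lE : nat -> 'cV[R]_mE) (lI : nat -> 'cV[R]_mI)
  (beta rho epsb : nat -> R) (beta0 rho0 sigma : R) :
  (* assumptions on f *)
  convex_fun f -> has_gradient f gradf -> lipschitz_grad Lf gradf ->
  0 <= mu -> strongly_convex mu f ->
  (* assumptions on r *)
  proper_fun r -> convex_efun r -> lsc_efun r ->
  (* KKT point (xs, [lEs; lIs]) *)
  (exists g, subgrad (Gfun f r) xs g /\
     g + AE^T *m lEs + AI^T *m lIs = 0) ->
  AE *m xs = bE ->
  (forall i, (AI *m xs) i 0 <= bI i 0) ->
  (forall i, 0 <= lIs i 0) ->
  dotv lIs (AI *m xs - bI) = 0 ->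
  (* parameters *)
  0 < beta0 -> 0 < rho0 -> 1 < sigma ->
  (forall k, beta k = beta0 * sigma ^+ k) ->
  (forall k, rho k = rho0 / sigma ^+ k) ->
  (forall k, 0 <= epsb k) ->
  (* iPALM iterates *)
  (Gfun f r (x 0%N) < +oo)%E ->
  (forall k : nat,
     dist0_subdiff_le
       (fun z => (aug_lag f r AE bE AI bI (beta k) z (lE k) (lI k)
                  + (rho k / 2 * normv (z - x k) ^+ 2)%:E)%E)
       (x k.+1) (epsb k)) ->
  (forall k : nat, lE k.+1 = lE k + beta k *: (AE *m x k.+1 - bE)) ->
  (forall k : nat, lI k.+1 = pospart (lI k + beta k *: (AI *m x k.+1 - bI))) ->
  forall k : nat,
    Num.sqrt (beta0 * rho0 * normv (x k.+1 - xs) ^+ 2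
              + (normv (lE k.+1 - lEs) ^+ 2 + normv (lI k.+1 - lIs) ^+ 2))
    <= \sum_(i < k.+1) (2 * beta i * epsb i / Num.sqrt (beta0 * rho0))
       + Num.sqrt (beta0 * rho0 * normv (x 0%N - xs) ^+ 2
              + (normv (lE 0%N - lEs) ^+ 2 + normv (lI 0%N - lIs) ^+ 2)).

Proof.
move=> fc _ _ _ _ [_ rp] rc _ KKT hAE hAI hlIs hcomp b0 r0 s1 hbeta hrho heps _ Hd HE HI.
have s0 : 0 < sigma by lra.
have hc : forall k, beta k * rho k = beta0 * rho0.
  move=> k; rewrite hbeta hrho; field.
  by rewrite expf_neq0 // gt_eqF.
have hst : forall k,
  Num.sqrt (beta0 * rho0 * normv (x k.+1 - xs) ^+ 2
              + (normv (lE k.+1 - lEs) ^+ 2 + normv (lI k.+1 - lIs) ^+ 2))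
  <= 2 * beta k * epsb k / Num.sqrt (beta0 * rho0)
     + Num.sqrt (beta0 * rho0 * normv (x k - xs) ^+ 2
              + (normv (lE k - lEs) ^+ 2 + normv (lI k - lIs) ^+ 2)).
  move=> k.
  have bk : 0 < beta k by rewrite hbeta mulr_gt0 // exprn_gt0.
  have rk : 0 < rho k by rewrite hrho divr_gt0 // exprn_gt0.
  exact: (step fc rc rp KKT hAE hAI hlIs hcomp bk rk (hc k) (heps k) (Hd k) (HE k) (HI k)).
elim=> [|k IH].
  by rewrite big_ord1; exact: hst.
rewrite big_ord_recr /=.
apply: (le_trans (hst k.+1)).
rewrite addrC -addrA lerD2l; exact: IH.
Qed.
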